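(* As formal power series in $y$, \[ \sum_{n\ge0}D_n(x)y^n=\frac{(1-xy+y)(1+x^2y^2)}{(1-xy)(1-xy^2)-xy^3}+(2x-1)y . \]
   Context: For $n\ge1$ let $\Xi_n$ be the poset on $\{x_1,\dots,x_n\}$ whose cover relations are exactly: $x_2\prec x_1$, $x_3\prec x_2$, and for $3\le i\le n-1$, $x_i\prec x_{i+1}$ if $i$ is odd and $x_{i+1}\prec x_i$ if $i$ is even (so $x_1>x_2>x_3<x_4>x_5<\cdots$). A filter of a poset is an up-closed subset. The matchable Lucas cube $\Omega_n$ is the graph whose vertices are the filters of $\Xi_n$, two filters adjacent iff one is obtained from the other by deleting a single element; $\Omega_0$ is the one-vertex graph. $d_{n,k}$ is the number of vertices of degree $k$ in $\Omega_n$ and $D_n(x)=\sum_{k\ge0}d_{n,k}x^k$ is the degree sequence polynomial. *)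

(* Defs.v *)
From mathcomp Require Import all_boot all_order all_algebra.
Set Implicit Arguments. Unset Strict Implicit. Unset Printing Implicit Defensive.
Import GRing.Theory.
Local Open Scope ring_scope.

(* Element i : 'I_n stands for x_(i+1). *)
(* xi_cover n a b  <->  x_(a+1) is covered by x_(b+1)  (x_(a+1) < x_(b+1)) *)
Definition xi_cover (n : nat) : rel 'I_n := fun a b =>
  let i := (a : nat).+1 in let j := (b : nat).+1 in
  [|| (i == 2%N) && (j == 1%N),
      (i == 3%N) && (j == 2%N),
      [&& (3 <= i)%N, (i <= n.-1)%N, odd i & j == i.+1]
    | [&& (3 <= j)%N, (j <= n.-1)%N, ~~ odd j & i == j.+1]].

Definition xi_le (n : nat) : rel 'I_n := connect (@xi_cover n).

Definition is_filter (n : nat) (F : {set 'I_n}) : bool :=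
  [forall a, forall b, (a \in F) && xi_le a b ==> (b \in F)].

Definition omega_adj (n : nat) (F G : {set 'I_n}) : bool :=
  [exists a, (a \in F) && (G == F :\ a)] || [exists a, (a \in G) && (F == G :\ a)].

Definition omega_deg (n : nat) (F : {set 'I_n}) : nat :=
  #|[set G : {set 'I_n} | is_filter G && omega_adj F G]|.

Definition dnk (n k : nat) : nat :=
  #|[set F : {set 'I_n} | is_filter F && (omega_deg F == k)]|.

(* D_n(x) = sum_k d_{n,k} x^k  (degrees are < number of subsets + 1) *)
Definition Dpoly (n : nat) : {poly int} :=
  \sum_(k < #|{set 'I_n}|.+1) (dnk n k)%:R *: 'X^k.

(* Polynomials in y with coefficients in Z[x] *)
Definition xv : {poly {poly int}} := ('X : {poly int})%:P.
Definition yv : {poly {poly int}} := 'X.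

Definition genDen : {poly {poly int}} :=
  (1 - xv * yv) * (1 - xv * yv ^+ 2) - xv * yv ^+ 3.
Definition genNum : {poly {poly int}} :=
  (1 - xv * yv + yv) * (1 + xv ^+ 2 * yv ^+ 2).
(* RHS times denominator: numerator + (2x - 1) y * denominator *)
Definition genRHSnum : {poly {poly int}} :=
  genNum + (2%:R * xv - 1) * yv * genDen.

(* Main.v *)
Require Import Defs.
From mathcomp Require Import all_boot all_order all_algebra.
From mathcomp Require Import ring zify.
Import GRing.Theory.
Local Open Scope ring_scope.
Set Implicit Arguments. Unset Strict Implicit. Unset Printing Implicit Defensive.

Definition up (j : nat) : bool := (j == 0)%N || odd j.
Definition cov (i j : nat) : bool := ((j == i.+1) && ~~ up i) || ((i == j.+1) && up j).

Lemma covE_nat (n a b : nat) : (a < n)%N -> (b < n)%N ->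
  [|| (a.+1 == 2%N) && (b.+1 == 1%N),
      (a.+1 == 3%N) && (b.+1 == 2%N),
      [&& (3 <= a.+1)%N, (a.+1 <= n.-1)%N, odd a.+1 & b.+1 == a.+2]
    | [&& (3 <= b.+1)%N, (b.+1 <= n.-1)%N, ~~ odd b.+1 & a.+1 == b.+2]] = cov a b.
Proof.
move=> Ha Hb; rewrite /cov /up.
case: a Ha => [|[|[|a]]] Ha; case: b Hb => [|[|[|b]]] Hb /=.
all: rewrite ?andbF ?orbF ?negbK //=.
  rewrite !eqSS andbT; case: b Hb => //= Hb; lia.
rewrite !eqSS.
have [Eb|h1] := eqVneq b a.+1.
  subst b; rewrite andbT /=.
  have -> : (a.+3 < n.-1)%N by lia.
  have -> : (a == a.+2) = false by lia.
  by rewrite !andbF !orbF.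
rewrite !andbF /=.
have [Ea|h2] := eqVneq a b.+1.
  subst a; rewrite andbT /=.
  have -> : (b.+3 < n.-1)%N by lia.
  by [].
by rewrite !andbF.
Qed.

Lemma xi_coverE n (a b : 'I_n) : xi_cover a b = cov a b.
Proof. exact: covE_nat. Qed.

Lemma cov_irr i : cov i i = false.
Proof. rewrite /cov; have -> : (i == i.+1) = false by lia. by []. Qed.

Lemma is_filterE n (F : {set 'I_n}) :
  is_filter F = [forall a : 'I_n, forall b : 'I_n, (a \in F) && cov a b ==> (b \in F)].
Proof.
apply/forallP/forallP => H a.
- apply/forallP => b; apply/implyP => /andP [aF ab].
  have := forallP (H a) b; rewrite aF /xi_le connect1 //=; by rewrite xi_coverE.
- apply/forallP => b; apply/implyP => /andP [aF /connectP [p pth ->]].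
  elim: p a aF pth => //= c p IH a aF /andP [ac pth]; apply: (IH c _ pth).
  have := forallP (H a) c; rewrite aF -xi_coverE ac /=; by [].
Qed.

Definition seqof n (F : {set 'I_n}) : seq bool := [seq i \in F | i <- enum 'I_n].

Lemma size_seqof n (F : {set 'I_n}) : size (seqof F) = n.
Proof. by rewrite size_map size_enum_ord. Qed.

Lemma nth_seqof n (F : {set 'I_n}) (i : 'I_n) : nth false (seqof F) i = (i \in F).
Proof. by rewrite (nth_map i) ?size_enum_ord // nth_ord_enum. Qed.

Lemma nth_seqof' n (F : {set 'I_n}) (i : nat) (Hi : (i < n)%N) :
  nth false (seqof F) i = (Ordinal Hi \in F).
Proof. by rewrite -nth_seqof. Qed.

Definition ok (i : nat) (a b : bool) := if up i then b ==> a else a ==> b.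
Definition filt (s : seq bool) : bool :=
  all (fun i => ok i (nth false s i) (nth false s i.+1)) (iota 0 (size s).-1).

Lemma closed_filt n (F : {set 'I_n}) :
  [forall a : 'I_n, forall b : 'I_n, (a \in F) && cov a b ==> (b \in F)] = filt (seqof F).
Proof.
apply/idP/idP.
- move=> H; apply/allP => i; rewrite mem_iota size_seqof add0n => Hi.
  have Hi0 : (i < n)%N by lia.
  have Hi1 : (i.+1 < n)%N by lia.
  rewrite /ok (nth_seqof' F Hi0) (nth_seqof' F Hi1).
  case U: (up i); apply/implyP => Hf.
  + have := forallP (forallP H (Ordinal Hi1)) (Ordinal Hi0).
    by rewrite Hf /= /cov /= U eqxx orbT.
  + have := forallP (forallP H (Ordinal Hi0)) (Ordinal Hi1).
    by rewrite Hf /= /cov /= U eqxx.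
- move=> /allP H; apply/forallP => a; apply/forallP => b; apply/implyP => /andP [aF ab].
  rewrite -nth_seqof; rewrite -nth_seqof in aF.
  move: ab; rewrite /cov => /orP [/andP [/eqP Eb U] | /andP [/eqP Ea U]].
  + have Hb := ltn_ord b.
    have := H a; rewrite mem_iota size_seqof add0n /ok (negbTE U) -Eb aF /=.
    by apply; lia.
  + have Ha := ltn_ord a.
    have := H b; rewrite mem_iota size_seqof add0n /ok U -Ea aF /=.
    by apply; lia.
Qed.

Lemma filter_del n (F : {set 'I_n}) (a : 'I_n) : is_filter F -> a \in F ->
  is_filter (F :\ a) = [forall c : 'I_n, cov c a ==> (c \notin F)].
Proof.
rewrite !is_filterE => HF aF; apply/forallP/forallP => H c.
- apply/implyP => ca; apply/negP => cF.
  have := forallP (H c) a; rewrite !in_setD1 cF ca eqxx andbT /=.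
  have -> // : c != a by apply/eqP => E; rewrite E cov_irr in ca.
- apply/forallP => d; apply/implyP => /andP [].
  rewrite !in_setD1 => /andP [ca cF] cd.
  rewrite (implyP (forallP (forallP HF c) d)) ?cF ?cd // andbT.
  apply/eqP => E; rewrite E in cd.
  by have := implyP (H c) cd; rewrite cF.
Qed.

Lemma filter_add n (F : {set 'I_n}) (a : 'I_n) : is_filter F -> a \notin F ->
  is_filter (a |: F) = [forall d : 'I_n, cov a d ==> (d \in F)].
Proof.
rewrite !is_filterE => HF aF; apply/forallP/forallP => H c.
- apply/implyP => ac.
  have := forallP (H a) c; rewrite !in_setU1 eqxx ac /=.
  have -> // : (c == a) = false by apply/eqP => E; rewrite E cov_irr in ac.
- apply/forallP => d; apply/implyP => /andP [].
  rewrite !in_setU1 => /orP [/eqP -> | cF] cd.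
  + by rewrite (implyP (H d)) // orbT.
  + by rewrite (implyP (forallP (forallP HF c) d)) ?cF ?cd // orbT.
Qed.

Definition phi n (F : {set 'I_n}) (a : 'I_n) := if a \in F then F :\ a else a |: F.

Lemma mem_phi n (F : {set 'I_n}) a x : (x \in phi F a) = (x \in F) (+) (x == a).
Proof.
rewrite /phi; case aF: (a \in F).
- rewrite in_setD1; case: eqP => [->|_]; by rewrite ?aF ?addbT ?addbF.
- rewrite in_setU1; case: eqP => [->|_]; by rewrite ?aF ?addbT ?addbF.
Qed.

Lemma phi_inj n (F : {set 'I_n}) : injective (phi F).
Proof.
move=> a b E; have := mem_phi F a a; rewrite E mem_phi eqxx.
by case: (a \in F) => /= /eqP; rewrite ?eqb_id ?eqbF_neg ?negbK // => /eqP.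
Qed.

Definition condA n (F : {set 'I_n}) (a : 'I_n) : bool :=
  if a \in F then is_filter (F :\ a) else is_filter (a |: F).

Lemma omega_degE n (F : {set 'I_n}) :
  omega_deg F = \sum_(a : 'I_n) nat_of_bool (condA F a).
Proof.
rewrite /omega_deg; set A := [set a : 'I_n | condA F a].
have -> : [set G : {set 'I_n} | is_filter G && omega_adj F G] = phi F @: A.
  apply/setP => G; rewrite inE; apply/andP/imsetP.
  - case=> HG /orP [/existsP [a /andP [aF /eqP EG]] | /existsP [a /andP [aG /eqP EF]]].
    + exists a; last by rewrite /phi aF.
      by rewrite inE /condA aF -EG.
    + have aF : a \notin F by rewrite EF setD11.
      have EG : G = a |: F by rewrite EF setD1K.
      exists a; last by rewrite /phi (negbTE aF).
      by rewrite inE /condA (negbTE aF) -EG.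
  - case=> a; rewrite inE => Ha ->; split.
    + by move: Ha; rewrite /phi /condA; case: (a \in F).
    + rewrite /omega_adj /phi; case aF: (a \in F).
      * by apply/orP; left; apply/existsP; exists a; rewrite aF eqxx.
      * by apply/orP; right; apply/existsP; exists a; rewrite setU11 setU1K ?aF // eqxx.
rewrite card_imset; last exact: phi_inj.
rewrite -sum1_card big_mkcond /=; apply: eq_bigr => a _.
by rewrite inE; case: (condA F a).
Qed.

Definition ctr (i : nat) (hr l m r : bool) : bool :=
  if m then ~~ ((hr && up i && r) || ((0 < i)%N && ~~ up i.-1 && l))
  else ~~ ((hr && ~~ up i && ~~ r) || ((0 < i)%N && up i.-1 && ~~ l)).

Definition contrib (s : seq bool) (i : nat) : bool :=
  ctr i (i.+1 < size s)%N (nth false s i.-1) (nth false s i) (nth false s i.+1).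

Definition deg (s : seq bool) : nat := sumn [seq nat_of_bool (contrib s i) | i <- iota 0 (size s)].

Lemma condA_contrib n (F : {set 'I_n}) (a : 'I_n) : is_filter F ->
  condA F a = contrib (seqof F) a.
Proof.
move=> HF; have Ha := ltn_ord a.
rewrite /condA /contrib /ctr size_seqof nth_seqof.
case aF: (a \in F).
- rewrite filter_del //; apply/forallP/idP => H.
  + apply/negP => /orP [/andP [/andP [hr U] fa1] | /andP [/andP [a0 U] fa1]].
    * have := implyP (H (Ordinal hr)); rewrite /cov /= eqxx U orbT.
      by rewrite -(nth_seqof' F hr) fa1 => /(_ isT).
    * have hl : (a.-1 < n)%N by lia.
      have := implyP (H (Ordinal hl)); rewrite /cov /= U.
      have -> : (a == a.-1.+1 :> nat) by lia.
      by rewrite -(nth_seqof' F hl) fa1 => /(_ isT).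
  + move=> c; apply/implyP; rewrite -nth_seqof /cov => /orP [/andP [/eqP Ea U] | /andP [/eqP Ec U]].
    * apply: contraTN H => fc; rewrite Ea /= U fc /=; by rewrite orbT.
    * apply: contraTN H => fc; rewrite -Ec fc U /= andbT.
      by rewrite ltn_ord.
- rewrite filter_add ?aF //; apply/forallP/idP => H.
  + apply/negP => /orP [/andP [/andP [hr U] fa1] | /andP [/andP [a0 U] fa1]].
    * have := implyP (H (Ordinal hr)); rewrite /cov /= eqxx U /=.
      by rewrite -(nth_seqof' F hr) (negbTE fa1) => /(_ isT).
    * have hl : (a.-1 < n)%N by lia.
      have := implyP (H (Ordinal hl)); rewrite /cov /= U.
      have -> : (a == a.-1.+1 :> nat) by lia.
      by rewrite -(nth_seqof' F hl) (negbTE fa1) orbT => /(_ isT).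
  + move=> d; apply/implyP; rewrite -nth_seqof /cov => /orP [/andP [/eqP Ed U] | /andP [/eqP Ea U]].
    * apply: contraTT H => fd; rewrite -Ed (negbTE fd) U /= andbT.
      by rewrite ltn_ord.
    * apply: contraTT H => fd; rewrite Ea /= U (negbTE fd) /=; by rewrite orbT.
Qed.

Lemma Dpoly_sets n : Dpoly n = \sum_(F : {set 'I_n} | is_filter F) 'X^(omega_deg F).
Proof.
rewrite /Dpoly.
rewrite (partition_big (fun F => inord (omega_deg F) : 'I_(#|{set 'I_n}|).+1) xpredT) //=.
apply: eq_bigr => k _.
rewrite scaler_nat /dnk -sumr_const.
apply: eq_big => F.
- rewrite inE; congr (_ && _).
  rewrite -val_eqE /= inordK // ltnS; exact: max_card.
- rewrite inE => /andP [_ /eqP <-]; by [].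
Qed.

Lemma deg_seqof n (F : {set 'I_n}) : is_filter F -> omega_deg F = deg (seqof F).
Proof.
move=> HF; rewrite omega_degE /deg size_seqof sumnE big_map.
have E : forall f : nat -> nat, (\sum_(j <- iota 0 n) f j = \sum_(i < n) f i)%N.
  by move=> f; rewrite -(big_mkord xpredT f) /index_iota subn0.
rewrite E; by apply: eq_bigr => a _; rewrite condA_contrib.
Qed.

Fixpoint allseqs (k : nat) : seq (seq bool) :=
  if k is k'.+1 then [seq rcons s b | s <- allseqs k', b <- [:: false; true]]
  else [:: [::]].

Lemma allseqsS k : allseqs k.+1 = [seq rcons s b | s <- allseqs k, b <- [:: false; true]].
Proof. by []. Qed.

Lemma mem_allseqs k s : (s \in allseqs k) = (size s == k).
Proof.
elim: k s => [|k IH] s.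
  by rewrite inE size_eq0.
rewrite allseqsS; apply/allpairsP/idP.
- by case=> [[s' b] [/= Hs _ ->]]; rewrite size_rcons eqSS -IH.
- case/lastP: s => [//|s' b]; rewrite size_rcons eqSS => Hs.
  by exists (s', b); split => //=; [rewrite IH | case: b].
Qed.

Lemma uniq_allseqs k : uniq (allseqs k).
Proof.
elim: k => [//|k IH].
rewrite allseqsS; apply: allpairs_uniq => //.
by move=> [s1 b1] [s2 b2] _ _ /= /rcons_inj [-> ->].
Qed.

Lemma seqof_inj n : injective (@seqof n).
Proof.
move=> F G E; apply/setP => i; by rewrite -!nth_seqof E.
Qed.

Lemma perm_seqof n : perm_eq [seq seqof F | F <- enum {set 'I_n}] (allseqs n).
Proof.
apply: uniq_perm; first by rewrite map_inj_uniq ?enum_uniq //; exact: seqof_inj.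
  exact: uniq_allseqs.
move=> s; rewrite mem_allseqs; apply/mapP/idP.
- by case=> F _ ->; rewrite size_seqof.
- move/eqP => Hs; exists [set i : 'I_n | nth false s i]; first by rewrite mem_enum.
  apply: (@eq_from_nth _ false); first by rewrite size_seqof.
  move=> i; rewrite Hs => Hi; by rewrite (nth_seqof' _ Hi) inE.
Qed.

Definition Dseq (n : nat) : {poly int} := \sum_(s <- allseqs n | filt s) 'X^(deg s).

Lemma Dpoly_seq n : Dpoly n = Dseq n.
Proof.
rewrite Dpoly_sets /Dseq -(perm_big _ (perm_seqof n)) big_map.
have PE : perm_eq (enum {set 'I_n}) (index_enum {set 'I_n}).
  apply: uniq_perm; rewrite ?enum_uniq ?index_enum_uniq // => F.
  by rewrite mem_enum mem_index_enum.
rewrite (perm_big _ PE) /=.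
apply: eq_big => F.
- by rewrite is_filterE closed_filt.
- by move=> HF; rewrite deg_seqof.
Qed.

Definition pd (s : seq bool) : nat :=
  sumn [seq nat_of_bool (contrib s i) | i <- iota 0 (size s).-1].

Definition Gk (k : nat) (p q : bool) : {poly int} :=
  \sum_(s <- allseqs k | filt s && (nth false s k.-2 == p) && (nth false s k.-1 == q)) 'X^(pd s).

Lemma iotaS0 k : iota 0 k.+1 = rcons (iota 0 k) k.
Proof. by rewrite -addn1 iotaD add0n cats1. Qed.

Lemma deg_pd s k : size s = k.+1 ->
  deg s = (pd s + ctr k false (nth false s k.-1) (nth false s k) false)%N.
Proof.
move=> Hs; rewrite /deg /pd Hs iotaS0 map_rcons -cats1 sumn_cat /= addn0.
congr (_ + _)%N; rewrite /contrib Hs ltnn [nth false s k.+1]nth_default ?Hs //.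
Qed.

Lemma contrib_rcons_lt s r i : (i.+1 < size s)%N -> contrib (rcons s r) i = contrib s i.
Proof.
move=> Hi; rewrite /contrib size_rcons !nth_rcons.
have -> : (i.+1 < (size s).+1)%N by lia.
have -> : (i.-1 < size s)%N by lia.
have -> : (i < size s)%N by lia.
by rewrite Hi.
Qed.

Lemma pd_rcons s r k : size s = k.+1 ->
  pd (rcons s r) = (pd s + ctr k true (nth false s k.-1) (nth false s k) r)%N.
Proof.
move=> Hs; rewrite /pd size_rcons Hs succnK iotaS0 map_rcons -cats1 sumn_cat /= addn0.
congr (_ + _)%N.
  have E : {in iota 0 k, (fun i => nat_of_bool (contrib (rcons s r) i)) =1 (fun i => nat_of_bool (contrib s i))}.
    move=> i; rewrite mem_iota add0n => Hi.
    by rewrite /= contrib_rcons_lt // Hs.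
  by congr sumn; apply/eq_in_map.
rewrite /contrib size_rcons !nth_rcons Hs.
have -> : (k.-1 < k.+1)%N by lia.
by rewrite ltnSn ltnSn ltnn eqxx.
Qed.

Lemma filt_rcons s r k : size s = k.+1 ->
  filt (rcons s r) = filt s && ok k (nth false s k) r.
Proof.
move=> Hs; rewrite /filt size_rcons Hs succnK iotaS0 all_rcons andbC.
congr (_ && _).
  apply: eq_in_all => i; rewrite mem_iota add0n => Hi.
  rewrite !nth_rcons Hs.
  have -> : (i < k.+1)%N by lia.
  by have -> : (i.+1 < k.+1)%N by lia.
by rewrite !nth_rcons Hs ltnSn ltnn eqxx.
Qed.

Lemma sum_cond_split (I : Type) (r : seq I) (P : pred I) (F : I -> {poly int}) c :
  (if c then \sum_(i <- r | P i) F i else 0) = \sum_(i <- r) (if c && P i then F i else 0).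
Proof.
case: c => /=; first by rewrite big_mkcond.
by rewrite big1.
Qed.

Lemma Gk_step k q r :
  Gk k.+2 q r = \sum_(p : bool) (if ok k q r then 'X^(ctr k true p q r) * Gk k.+1 p q else 0).
Proof.
rewrite /Gk allseqsS big_mkcond big_allpairs_dep.
under [RHS]eq_bigr => p _ do rewrite big_distrr sum_cond_split.
rewrite [RHS]exchange_big.
rewrite !big_seq; apply: eq_bigr => s; rewrite mem_allseqs => /eqP Hs.
rewrite big_bool !big_cons big_nil.
rewrite !(@filt_rcons s _ k Hs) !(@pd_rcons s _ k Hs) !nth_rcons Hs /= ltnSn ltnn eqxx.
move: (nth false s k.-1) (nth false s k) (filt s) (ok k) (ctr k true) (pd s) => l m f okf cf d.
by case: l; case: m; case: q; case: r; case: f;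
  rewrite /= ?andbT ?andbF ?addr0 ?add0r //; case: (okf _ _); rewrite /= ?addr0 ?add0r ?exprD ?(mulrC 'X^d) //.
Qed.

Lemma Dseq_G k :
  Dseq k.+2 = \sum_(p : bool) \sum_(q : bool) 'X^(ctr k.+1 false p q false) * Gk k.+2 p q.
Proof.
rewrite /Dseq /Gk.
under [RHS]eq_bigr => p _ do under eq_bigr => q _ do rewrite big_distrr big_mkcond.
under [RHS]eq_bigr => p _ do rewrite exchange_big.
rewrite [RHS]exchange_big big_mkcond.
rewrite !big_seq; apply: eq_bigr => s; rewrite mem_allseqs => /eqP Hs.
rewrite (@deg_pd s k.+1 Hs) !big_bool.
change (k.+2.-2) with k; change (k.+2.-1) with k.+1; change (k.+1.-1) with k.
move: (nth false s k) (nth false s k.+1) (filt s) (ctr k.+1 false) (pd s) => l m f cf d.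
by case: l; case: m; case: f; rewrite /= ?addr0 ?add0r ?exprD ?(mulrC 'X^d).
Qed.

Lemma Gk1 p q : Gk 1 p q = if p == q then 1 else 0.
Proof.
rewrite /Gk /= !big_cons big_nil /=.
by case: p; case: q; rewrite /= ?addr0 ?add0r ?expr0.
Qed.

Lemma Dseq0 : Dseq 0 = 1.
Proof. by rewrite /Dseq /= big_cons big_nil /= addr0 expr0. Qed.

Lemma Dseq1 : Dseq 1 = 2%:R * 'X.
Proof. rewrite /Dseq /= !big_cons big_nil /= addr0 expr1. by rewrite mulr2n mulrDl mul1r. Qed.

Definition xp : {poly int} := 'X.

Lemma Dseq2 : Dseq 2 = 2%:R * xp + xp ^+ 2.
Proof. rewrite Dseq_G !big_bool !Gk_step !big_bool !Gk1 /= /xp; ring. Qed.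

Lemma Dseq3 : Dseq 3 = 2%:R * xp + 2%:R * xp ^+ 2.
Proof. rewrite Dseq_G !big_bool !Gk_step !big_bool !Gk_step !big_bool !Gk1 /= /xp; ring. Qed.

Lemma Dseq4 : Dseq 4 = xp + 3%:R * xp ^+ 2 + 3%:R * xp ^+ 3.
Proof. rewrite Dseq_G !big_bool !Gk_step !big_bool !Gk_step !big_bool !Gk_step !big_bool !Gk1 /= /xp; ring. Qed.

Lemma Dseq5 : Dseq 5 = 5%:R * xp ^+ 2 + 4%:R * xp ^+ 3 + 2%:R * xp ^+ 4.
Proof. rewrite Dseq_G !big_bool !Gk_step !big_bool !Gk_step !big_bool !Gk_step !big_bool !Gk_step !big_bool !Gk1 /= /xp; ring. Qed.

Lemma upS n : up n.+1 = odd n.+1.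
Proof. by []. Qed.

Lemma Dseq_rec j :
  Dseq j.+3.+3 = xp * Dseq j.+3.+2 + xp * Dseq j.+3.+1 + (xp - xp ^+ 2) * Dseq j.+3.
Proof.
rewrite !Dseq_G !big_bool.
rewrite ![Gk j.+3.+3 _ _]Gk_step !big_bool ![Gk j.+3.+2 _ _]Gk_step !big_bool ![Gk j.+3.+1 _ _]Gk_step !big_bool.
rewrite /ctr /ok /= !upS /=.
move: (Gk j.+3 false false) (Gk j.+3 false true) (Gk j.+3 true false) (Gk j.+3 true true) => a b c d.
by case: (odd j); rewrite /= /xp; ring.
Qed.

Lemma genDen_coef k : genDen`_k = nth 0 [:: 1; - xp; - xp; xp ^+ 2 - xp] k.
Proof.
have -> : genDen = Poly [:: 1; - xp; - xp; xp ^+ 2 - xp].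
  rewrite /= !cons_poly_def /genDen /xv /yv /xp; ring.
by rewrite coef_Poly.
Qed.

Lemma genRHS_coef k : genRHSnum`_k =
  nth 0 [:: 1; xp; xp - xp ^+ 2; xp - xp ^+ 2 - xp ^+ 3; 2%:R * xp ^+ 3 - 3%:R * xp ^+ 2 + xp] k.
Proof.
have -> : genRHSnum = Poly [:: 1; xp; xp - xp ^+ 2; xp - xp ^+ 2 - xp ^+ 3; 2%:R * xp ^+ 3 - 3%:R * xp ^+ 2 + xp].
  rewrite /= !cons_poly_def /genRHSnum /genNum /genDen /xv /yv /xp; ring.
by rewrite coef_Poly.
Qed.

Theorem mainTheorem18 : forall n : nat,
  \sum_(k < n.+1) genDen`_k * Dpoly (n - k) = genRHSnum`_n.
Proof.
move=> n; rewrite genRHS_coef.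
under eq_bigr => k _ do rewrite genDen_coef Dpoly_seq.
case: n => [|[|[|[|[|[|j]]]]]].
all: rewrite ?big_ord_recl ?big_ord0 /= ?bump0 ?subSS ?subn0.
- by rewrite Dseq0 mul1r addr0.
- by rewrite Dseq1 Dseq0 /xp; ring.
- by rewrite Dseq2 Dseq1 Dseq0 /xp; ring.
- by rewrite Dseq3 Dseq2 Dseq1 Dseq0 /xp; ring.
- by rewrite Dseq4 Dseq3 Dseq2 Dseq1 Dseq0 /xp; ring.
- by rewrite Dseq5 Dseq4 Dseq3 Dseq2 Dseq1 /xp; ring.
- rewrite big1 => [|i _]; last by rewrite mul0r.
  rewrite (Dseq_rec j); ring.
Qed.
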